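(* Let $\mathcal C=\{1,\dots,n\}$, let $L$ be an evaluation scale (as in the context), let $\mu:2^{\mathcal C}\to L$ be a capacity, let $q\in\{1,\dots,n\}$ and let $x=(x_1,\dots,x_n)\in L^{n}$. (1) If $\mu$ is $q$-maxitive, then $$S_\mu(x)=\max_{A\subseteq\mathcal C,\ A\neq\emptyset,\ |A|\le q}\ \min\Big(\min_{i\in A}x_i,\ \mu(A)\Big).$$ (2) If $\mu$ is $q$-minitive, then $$S_\mu(x)=\min_{A\subsetneq\mathcal C,\ |A|\ge n-q}\ \max\Big(\max_{i\in \overline A}x_i,\ \mu(A)\Big),$$ where $\overline A=\mathcal C\setminus A$.
   Context: $L$ is either a finite totally ordered set $0=\xi_1<\xi_2<\dots<\xi_l=1$ or $L=[0,1]$. A capacity is a map $\mu:2^{\mathcal C}\to L$ with $\mu(\emptyset)=0$, $\mu(\mathcal C)=1$ and $A\subseteq B\Rightarrow\mu(A)\le\mu(B)$. The Sugeno integral of $x\in L^n$ w.r.t. $\mu$ is $S_\mu(x)=\max_{A\subseteq\mathcal C}\min(\min_{i\in A}x_i,\mu(A))$ (with $\min_{i\in\emptyset}x_i=1$), which equals $\min_{A\subseteq\mathcal C}\max(\max_{i\in\overline A}x_i,\mu(A))$ (with $\max_{i\in\emptyset}x_i=0$). A capacity $\mu$ is $q$-maxitive if for all $X\subseteq\mathcal C$ with $|X|>q$, $\mu(X)=\max_{Y\subsetneq X,\ |Y|\le q}\mu(Y)$; it is $q$-minitive if for all $X\subseteq\mathcal C$ with $|X|<n-q$, $\mu(X)=\min_{Y\supsetneq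 X,\ |Y|\ge n-q}\mu(Y)$. *)

(* Defs.v *)
(* The evaluation scale L is modelled as an arbitrary
   bounded totally ordered type (tbOrderType): this covers both the finite
   chains 0 = xi_1 < ... < xi_l = 1 and the real interval [0,1]. *)
From HB Require Import structures.
From mathcomp Require Import all_boot all_order.
Set Implicit Arguments. Unset Strict Implicit. Unset Printing Implicit Defensive.
Import Order.TTheory.
Local Open Scope order_scope.

Section Defs.
Context {disp : Order.disp_t} {L : tbOrderType disp} {n : nat}.

(* criteria C = {1..n} are represented by 'I_n *)
Definition is_capacity (mu : {set 'I_n} -> L) : Prop :=
  [/\ mu set0 = Order.bottom, mu setT = Order.top &
      forall A B : {set 'I_n}, A \subset B -> mu A <= mu B].

Definition sugeno (mu : {set 'I_n} -> L) (x : 'I_n -> L) : L :=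
  \big[Order.max/Order.bottom]_(A : {set 'I_n})
     Order.min (\big[Order.min/Order.top]_(i in A) x i) (mu A).

Definition q_maxitive (q : nat) (mu : {set 'I_n} -> L) : Prop :=
  forall X : {set 'I_n}, (q < #|X|)%N ->
    mu X = \big[Order.max/Order.bottom]_(Y : {set 'I_n} | (Y \proper X) && (#|Y| <= q)%N) mu Y.

Definition q_minitive (q : nat) (mu : {set 'I_n} -> L) : Prop :=
  forall X : {set 'I_n}, (#|X| < n - q)%N ->
    mu X = \big[Order.min/Order.top]_(Y : {set 'I_n} | (X \proper Y) && (n - q <= #|Y|)%N) mu Y.

End Defs.

(* Main.v *)
Require Import Defs.
From HB Require Import structures.
From mathcomp Require Import all_boot all_order.
Import Order.TTheory.
Local Open Scope order_scope.

Section Aux.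
Context {disp : Order.disp_t} {L : tbOrderType disp} {n : nat}.

Lemma bigmin_sub (x : 'I_n -> L) (A Y : {set 'I_n}) : Y \subset A ->
  \big[Order.min/Order.top]_(i in A) x i <= \big[Order.min/Order.top]_(i in Y) x i.
Proof.
move=> sYA; apply: le_bigmin; first exact: bigmin_le_id.
move=> i iY; apply: bigmin_le_cond; exact: (subsetP sYA).
Qed.

Lemma bigmax_sub (x : 'I_n -> L) (A Y : {set 'I_n}) : Y \subset A ->
  \big[Order.max/Order.bottom]_(i in Y) x i <= \big[Order.max/Order.bottom]_(i in A) x i.
Proof.
move=> sYA; apply: bigmax_le; first exact: bigmax_ge_id.
move=> i iY; apply: le_bigmax_cond; exact: (subsetP sYA).
Qed.

Lemma sugeno_dual (mu : {set 'I_n} -> L) (x : 'I_n -> L) : is_capacity mu ->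
  sugeno mu x = \big[Order.min/Order.top]_(B : {set 'I_n})
     Order.max (\big[Order.max/Order.bottom]_(i in ~: B) x i) (mu B).
Proof.
case=> mu0 muT mon; apply: le_anti; apply/andP; split.
- apply: le_bigmin; first exact: lex1.
  move=> B _; apply: bigmax_le; first exact: le0x.
  move=> A _; case: (boolP (A \subset B)) => [sAB|/subsetPn [i iA niB]].
  + by rewrite ge_min !le_max (mon _ _ sAB) !orbT.
  + rewrite ge_min le_max; apply/orP; left; apply/orP; left.
    apply: (le_trans (bigmin_le_cond _ _ iA)).
    by apply: le_bigmax_cond; rewrite in_setC.
- have [v Hv] : {v | sugeno mu x = v} by exists (sugeno mu x).
  rewrite [X in _ <= X]Hv.
  apply: (bigmin_inf [set i | v < x i]) => //.
  rewrite ge_max; apply/andP; split.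
    apply: bigmax_le; first exact: le0x.
    by move=> i; rewrite in_setC in_set leNgt.
  rewrite leNgt; apply/negP => lt.
  have : Order.min (\big[Order.min/Order.top]_(i in [set i | v < x i]) x i)
          (mu [set i | v < x i]) <= v.
    rewrite -[X in _ <= X]Hv /sugeno.
    by apply: (bigmax_sup [set i | v < x i]).
  rewrite ge_min => /orP [|]; last by rewrite leNgt lt.
  rewrite leNgt => /negP; apply; apply/bigmin_gtP; split.
    exact: (lt_le_trans lt (lex1 _)).
  by move=> i; rewrite in_set.
Qed.

End Aux.

Theorem lemma1 (disp : Order.disp_t) (L : tbOrderType disp) (n : nat)
    (mu : {set 'I_n} -> L) (q : nat) (x : 'I_n -> L) :
  is_capacity mu -> (1 <= q <= n)%N ->
  (q_maxitive q mu ->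
     sugeno mu x =
     \big[Order.max/Order.bottom]_(A : {set 'I_n} | (A != set0) && (#|A| <= q)%N)
        Order.min (\big[Order.min/Order.top]_(i in A) x i) (mu A))
  /\
  (q_minitive q mu ->
     sugeno mu x =
     \big[Order.min/Order.top]_(A : {set 'I_n} | (A \proper setT) && (n - q <= #|A|)%N)
        Order.max (\big[Order.max/Order.bottom]_(i in ~: A) x i) (mu A)).
Proof.
move=> cap _; have [mu0 muT mon] := cap; split.
- move=> qmax; apply: le_anti; apply/andP; split; last first.
    apply: bigmax_le; first exact: le0x.
    by move=> A _; apply: (bigmax_sup A).
  apply: bigmax_le; first exact: le0x.
  move=> A _; set R := \big[Order.max/Order.bottom]_(A | _) _.
  case: (eqVneq A set0) => [->|A0].
    by rewrite mu0 ge_min le0x orbT.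
  case: (leqP #|A| q) => [Aq|qA].
    by apply: (bigmax_sup A) => //; rewrite A0 Aq.
  rewrite (qmax A qA) leNgt; apply/negP; rewrite lt_min => /andP [ltm ltM].
  have [Y /andP [PY ltY] | none] :=
    pickP (fun Y : {set 'I_n} => ((Y \proper A) && (#|Y| <= q)%N) && (R < mu Y)).
    case/andP: PY => pYA Yq.
    case: (eqVneq Y set0) => [Y0|Y0].
      by move: ltY; rewrite Y0 mu0 ltNge le0x.
    have : Order.min (\big[Order.min/Order.top]_(i in Y) x i) (mu Y) <= R.
      by apply: (bigmax_sup Y) => //; rewrite Y0 Yq.
    rewrite leNgt lt_min ltY andbT => /negP; apply.
    apply: (lt_le_trans ltm); apply: bigmin_sub; exact: proper_sub pYA.
  move: ltM; rewrite ltNge => /negP; apply.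
  apply: bigmax_le; first exact: le0x.
  move=> Y PY; have := none Y; rewrite /= PY /= => /negbT.
  by rewrite -leNgt.
- move=> qmin; rewrite sugeno_dual //.
  apply: le_anti; apply/andP; split.
    apply: le_bigmin; first exact: lex1.
    by move=> A _; apply: (bigmin_inf A).
  apply: le_bigmin; first exact: lex1.
  move=> A _; set R := \big[Order.min/Order.top]_(A | _) _.
  case: (eqVneq A setT) => [->|AT].
    by rewrite muT le_max lex1 orbT.
  case: (leqP (n - q) #|A|) => [Aq|qA].
    by apply: (bigmin_inf A) => //; rewrite properT AT Aq.
  rewrite (qmin A qA) leNgt; apply/negP; rewrite gt_max => /andP [ltm ltM].
  have [Y /andP [PY ltY] | none] :=
    pickP (fun Y : {set 'I_n} => ((A \proper Y) && (n - q <= #|Y|)%N) && (mu Y < R)).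
    case/andP: PY => pAY Yq.
    case: (eqVneq Y setT) => [YT|YT].
      by move: ltY; rewrite YT muT ltNge lex1.
    have : R <= Order.max (\big[Order.max/Order.bottom]_(i in ~: Y) x i) (mu Y).
      by apply: (bigmin_inf Y) => //; rewrite properT YT Yq.
    rewrite leNgt gt_max ltY andbT => /negP; apply.
    apply: (le_lt_trans _ ltm); apply: bigmax_sub.
    by rewrite setCS (proper_sub pAY).
  move: ltM; rewrite ltNge => /negP; apply.
  apply: le_bigmin; first exact: lex1.
  move=> Y PY; have := none Y; rewrite /= PY /= => /negbT.
  by rewrite -leNgt.
Qed.
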